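(* Consider the controlled system $\dot x = f(x)+g(x)u$, $y=h(x)$, with $x\in\mathbb{R}^{d_x}$, $u\in\mathbb{R}^{d_u}$, $y\in\mathbb{R}$, where $f,g,h$ are sufficiently many times differentiable, and let $\mathcal{S}\subset\mathbb{R}^{d_x}$ be open. Suppose that $\mathbf{H}_{d_o}$ is an immersion on $\mathcal{S}$ (e.g. the system is strongly differentially observable of order $d_o$ on $\mathcal{S}$), and that for every $i\in\{1,\dots,d_o\}$ and every $x\in\mathcal{S}$ there exist $L>0$ and a neighborhood $N$ of $x$ such that $$|L_gL_f^{i-1}h(x_a)-L_gL_f^{i-1}h(x_b)|\le L\,|\mathbf{H}_i(x_a)-\mathbf{H}_i(x_b)|\qquad\forall(x_a,x_b)\in N^2.$$ Then the system is uniformly infinitesimally observable on $\mathcal{S}$.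
   Context: $L_f$ is the Lie derivative along $f$, $L_g\alpha$ the row vector of Lie derivatives along the columns of $g$; $\mathbf{H}_i(x)=(h(x),L_fh(x),\dots,L_f^{i-1}h(x))$. Strongly differentially observable of order $d_o$ on $\mathcal{S}$: $\mathbf{H}_{d_o}$ is an injective immersion on $\mathcal{S}$. Uniform infinitesimal observability: consider the lifted system $\dot x=f(x)+g(x)u$, $\dot v=\big[\frac{\partial f}{\partial x}(x)+\frac{\partial (g u)}{\partial x}(x)\big]v$, with outputs $y=h(x)$, $w=\frac{\partial h}{\partial x}(x)v$, $v\in\mathbb{R}^{d_x}$, whose solutions are $(X_u(x,t),V_u((x,v),t))$. The system is uniformly infinitesimally observable on $\mathcal{S}$ if for any $(x,v)\in\mathcal{S}\times(\mathbb{R}^{d_x}\setminus\{0\})$, any $T>0$ and any $C^1$ function $u$ on $[0,T)$, there exists $t<T$ with $\frac{\partial h}{\partial x}(X_u(x,t))\,V_u((x,v),t)\ne0$ and $X_u(x,s)\in\mathcal{S}$ for all $s\le t$. *)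

(* Defs.v *)
From HB Require Import structures.
From mathcomp Require Import all_boot all_order all_algebra.
From mathcomp Require Import all_classical all_reals all_analysis.
Set Implicit Arguments. Unset Strict Implicit. Unset Printing Implicit Defensive.
Import Order.TTheory GRing.Theory Num.Theory.
Import numFieldNormedType.Exports.
Local Open Scope ring_scope.
Local Open Scope classical_set_scope.

Section Smoothness.
Variables (R : realType) (n : nat) (W : normedModType R).

Fixpoint Ck (k : nat) (phi : 'rV[R]_n -> W) : Prop :=
  match k with
  | 0 => continuous phi
  | k.+1 => (forall x, differentiable phi x) /\
            forall v : 'rV[R]_n, Ck k (fun x => 'D_v phi x)
  end.

Definition smooth (phi : 'rV[R]_n -> W) : Prop := forall k, Ck k phi.

Definition immersion_on (S : set 'rV[R]_n) (F : 'rV[R]_n -> W) : Prop :=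
  forall x, S x -> differentiable F x /\ (forall v, 'd F x v = 0 -> v = 0).
End Smoothness.

Section Lie.
Variables (R : realType) (dx du : nat).

Definition lie (F : 'rV[R]_dx -> 'rV[R]_dx) (phi : 'rV[R]_dx -> R) : 'rV[R]_dx -> R :=
  fun x => 'D_(F x) phi x.

Definition lieN (F : 'rV[R]_dx -> 'rV[R]_dx) (k : nat) (phi : 'rV[R]_dx -> R) :=
  iter k (lie F) phi.

(* L_g phi : row vector of Lie derivatives along the columns g_1..g_du of g *)
Definition lieG (g : 'I_du -> 'rV[R]_dx -> 'rV[R]_dx) (phi : 'rV[R]_dx -> R)
  : 'rV[R]_dx -> 'rV[R]_du :=
  fun x => \row_(j < du) lie (g j) phi x.

Definition Hmap (f : 'rV[R]_dx -> 'rV[R]_dx) (h : 'rV[R]_dx -> R) (i : nat)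
  : 'rV[R]_dx -> 'rV[R]_i :=
  fun x => \row_(k < i) lieN f k h x.

Definition C1_on_0T (T : R) (u : R -> 'rV[R]_du) : Prop :=
  {within [set t | 0 <= t < T], continuous u} /\
  (forall t, 0 < t < T -> derivable u t 1) /\
  exists du' : R -> 'rV[R]_du,
    {within [set t | 0 <= t < T], continuous du'} /\
    (forall t, 0 < t < T -> 'D_1 u t = du' t).

Definition lifted_solution (f : 'rV[R]_dx -> 'rV[R]_dx)
  (g : 'I_du -> 'rV[R]_dx -> 'rV[R]_dx) (T : R) (u : R -> 'rV[R]_du)
  (x0 v0 : 'rV[R]_dx) (X V : R -> 'rV[R]_dx) : Prop :=
  X 0 = x0 /\ V 0 = v0 /\
  {within [set t | 0 <= t < T], continuous X} /\
  {within [set t | 0 <= t < T], continuous V} /\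
  forall t, 0 < t < T ->
    [/\ derivable X t 1,
        'D_1 X t = f (X t) + \sum_(j < du) (u t) ord0 j *: g j (X t),
        derivable V t 1 &
        'D_1 V t = 'D_(V t) f (X t)
                   + \sum_(j < du) (u t) ord0 j *: 'D_(V t) (g j) (X t)].

(* Uniform infinitesimal observability on S (output y = h(x), w = dh(x) v). *)
Definition unif_inf_observable (f : 'rV[R]_dx -> 'rV[R]_dx)
  (g : 'I_du -> 'rV[R]_dx -> 'rV[R]_dx) (h : 'rV[R]_dx -> R)
  (S : set 'rV[R]_dx) : Prop :=
  forall (x v : 'rV[R]_dx), S x -> v != 0 ->
  forall T : R, 0 < T ->
  forall u : R -> 'rV[R]_du, C1_on_0T T u ->
  forall X V : R -> 'rV[R]_dx, lifted_solution f g T u x v X V ->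
  exists t, [/\ 0 <= t < T, 'D_(V t) h (X t) != 0 &
                forall s, 0 <= s <= t -> S (X s)].
End Lie.

(* Main.v *)
Require Import Defs.
From HB Require Import structures.
From mathcomp Require Import all_boot all_order all_algebra.
From mathcomp Require Import all_classical all_reals all_analysis.
From mathcomp Require Import ring lra.
Import Order.TTheory GRing.Theory Num.Theory.
Import numFieldNormedType.Exports.
Local Open Scope ring_scope.
Local Open Scope classical_set_scope.
Section Basic.
Variables (R : realType) (n : nat).
Local Notation E := 'rV[R]_n.

Lemma D_lin (phi : E -> R) (x v : E) : differentiable phi x ->
  'D_v phi x = \sum_(k < n) v 0 k * 'D_('e_k) phi x.
Proof.
move=> dphi; rewrite !deriveE //.
rewrite {1}(row_sum_delta v) linear_sum; apply: eq_bigr => k _.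
by rewrite linearZ /= deriveE.
Qed.

Lemma D_add (W : normedModType R) (phi : E -> W) (x a b : E) : differentiable phi x ->
  'D_(a + b) phi x = 'D_a phi x + 'D_b phi x.
Proof. by move=> d; rewrite !deriveE // linearD. Qed.

Lemma D_scale (W : normedModType R) (phi : E -> W) (x a : E) c : differentiable phi x ->
  'D_(c *: a) phi x = c *: 'D_a phi x.
Proof. by move=> d; rewrite !deriveE // linearZ. Qed.

Lemma D_sum (W : normedModType R) m (phi : E -> W) (x : E) (a : 'I_m -> E) :
  differentiable phi x ->
  'D_(\sum_(j < m) a j) phi x = \sum_(j < m) 'D_(a j) phi x.
Proof. by move=> d; rewrite !deriveE // linear_sum; apply: eq_bigr => j _; rewrite deriveE. Qed.



End Basic.
Section Ck.
Variables (R : realType) (n : nat).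
Local Notation E := 'rV[R]_n.

Lemma Ck_succ (W : normedModType R) k (phi : E -> W) : Ck k.+1 phi -> Ck k phi.
Proof.
elim: k phi => [|k IH] phi /= [d Dd].
  by move=> x; apply: differentiable_continuous.
by split => // v; apply: IH; apply: Dd.
Qed.

Lemma Ck_le (W : normedModType R) k m (phi : E -> W) : (m <= k)%N -> Ck k phi -> Ck m phi.
Proof.
elim: k m => [|k IH] m; first by rewrite leqn0 => /eqP ->.
rewrite leq_eqVlt => /orP[/eqP -> //|]; rewrite ltnS => mk /Ck_succ; exact: IH.
Qed.

Lemma Ck_cst (W : normedModType R) k (c : W) : Ck k (fun _ : E => c).
Proof.
elim: k c => [|k IH] c /=; first by move=> x; apply: cst_continuous.
split => [x|v]; first exact: differentiable_cst.
have -> : (fun x => 'D_v (fun _ : E => c) x) = (fun _ => 0) by apply/funext => x; rewrite derive_cst.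
exact: IH.
Qed.

Lemma Ck_add (W : normedModType R) k (phi psi : E -> W) : Ck k phi -> Ck k psi ->
  Ck k (fun x => phi x + psi x).
Proof.
elim: k phi psi => [|k IH] phi psi /=.
  by move=> c1 c2 x; exact: (continuousD (c1 x) (c2 x)).
move=> [d1 D1] [d2 D2]; split => [x|v]; first exact: differentiableD.
have -> : (fun x => 'D_v (fun y => phi y + psi y) x) = (fun x => 'D_v phi x + 'D_v psi x).
  apply/funext => x; rewrite -deriveD //; exact: diff_derivable.
exact: IH.
Qed.

Lemma Ck_mul k (phi psi : E -> R) : Ck k phi -> Ck k psi ->
  Ck k (fun x => phi x * psi x).
Proof.
elim: k phi psi => [|k IH] phi psi /=.
  by move=> c1 c2 x; exact: (continuousM (c1 x) (c2 x)).
move=> [d1 D1] [d2 D2]; split => [x|v]; first exact: differentiableM.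
have -> : (fun x => 'D_v (fun y => phi y * psi y) x) =
   (fun x => phi x * 'D_v psi x + psi x * 'D_v phi x).
  apply/funext => x; rewrite -deriveM //; exact: diff_derivable.
apply: Ck_add; apply: IH => //; apply: Ck_succ => /=; by split.
Qed.

Lemma Ck_sum (W : normedModType R) k m (F : 'I_m -> E -> W) :
  (forall i, Ck k (F i)) -> Ck k (fun x => \sum_(i < m) F i x).
Proof.
elim: m F => [|m IH] F HF.
  have -> : (fun x => \sum_(i < 0) F i x) = (fun _ => 0) by apply/funext => x; rewrite big_ord0.
  exact: Ck_cst.
have -> : (fun x => \sum_(i < m.+1) F i x) =
  (fun x => \sum_(i < m) F (widen_ord (leqnSn m) i) x + F ord_max x).
  by apply/funext => x; rewrite big_ord_recr.
apply: Ck_add => //; exact: IH.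
Qed.

Lemma Ck_coord k p (F : E -> 'rV[R]_p) j : Ck k F -> Ck k (fun x => F x 0 j).
Proof.
elim: k F => [|k IH] F /=.
  by move=> c x; exact: (continuous_comp (c x) (@coord_continuous R 1 p 0 j (F x))).
move=> [d D]; split => [x|v].
  exact: (differentiable_comp (d x) (differentiable_coord _ 0 j)).
have -> : (fun x => 'D_v (fun y => F y 0 j) x) = (fun x => 'D_v F x 0 j).
  apply/funext => x; rewrite derive_mx ?mxE //; exact: diff_derivable.
exact: IH.
Qed.

Lemma smooth_diff (W : normedModType R) (phi : E -> W) x : smooth phi -> differentiable phi x.
Proof. by move=> s; case: (s 1%N). Qed.

Lemma smooth_D (W : normedModType R) (phi : E -> W) v : smooth phi -> smooth (fun x => 'D_v phi x).
Proof. by move=> s k; case: (s k.+1) => _; apply. Qed.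

Lemma smooth_lie (F : E -> E) (phi : E -> R) : smooth F -> smooth phi -> smooth (lie F phi).
Proof.
move=> sF sp k.
have -> : lie F phi = (fun x => \sum_(i < n) F x 0 i * 'D_('e_i) phi x).
  by apply/funext => x; rewrite /lie D_lin //; apply: smooth_diff.
apply: Ck_sum => i; apply: Ck_mul; first exact: Ck_coord.
exact: smooth_D.
Qed.

Lemma smooth_lieN (F : E -> E) (phi : E -> R) k : smooth F -> smooth phi -> smooth (lieN F k phi).
Proof.
move=> sF sp; elim: k => [|k IH] //=.
exact: smooth_lie.
Qed.

End Ck.

Section T.
Variables (R : realType) (n : nat).
Local Notation E := 'rV[R]_n.
Lemma chain (psi : E -> R) (X : R -> E) t :
  differentiable psi (X t) -> derivable X t 1 ->
  derivable (psi \o X) t 1 /\ 'D_1 (psi \o X) t = 'D_('D_1 X t) psi (X t).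
Proof.
move=> dpsi /derivable1_diffP dX.
have dc := differentiable_comp dX dpsi.
split; first exact/derivable1_diffP.
by rewrite !deriveE // diff_comp.
Qed.
Lemma lineX (a c : E) r : derivable (fun s : R => s *: a + c) r 1 /\ 'D_1 (fun s : R => s *: a + c) r = a.
Proof.
have -> : (fun s : R => s *: a + c) = ( *:%R^~ a) + cst c by [].
have H := is_diffD (@is_diff_scalel R E r a) (@is_diff_cst R R E c r).
have d := @ex_diff _ _ _ _ _ _ _ H.
split; first exact: diff_derivable.
rewrite deriveE // (@diff_val _ _ _ _ _ _ _ H) /=.
by rewrite addr0 scale1r.
Qed.

Lemma line_deriv (psi : E -> R) (a c : E) r : differentiable psi (r *: a + c) ->
  is_derive r 1 (fun s => psi (s *: a + c)) ('D_a psi (r *: a + c)).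
Proof.
move=> d; have [dX DX] := lineX a c r.
have [h1 h2] := chain _ _ _ d dX.
apply: DeriveDef; first exact: h1.
by rewrite (_ : (fun s => psi (s *: a + c)) = psi \o (fun s => s *: a + c)) // h2 DX.
Qed.

Lemma line_MVT (psi : E -> R) (a c : E) s : 0 < s -> (forall y, differentiable psi y) ->
  exists2 xi, 0 < xi < s &
   psi (s *: a + c) - psi c = 'D_a psi (xi *: a + c) * s.
Proof.
move=> s0 d.
have cont : {within `[0, s], continuous (fun r => psi (r *: a + c))}.
  apply: derivable_within_continuous => r _.
  by have [] := line_deriv psi a c r (d (r *: a + c)).
have [xi xiI H] := @MVT R (fun r => psi (r *: a + c)) (fun r => 'D_a psi (r *: a + c)) 0 s s0
   (fun r _ => line_deriv _ _ _ r (d _)) cont.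
exists xi; first by move: xiI; rewrite in_itv.
by move: H; rewrite scale0r add0r subr0.
Qed.

Lemma MVT2 (phi : E -> R) (a b x : E) s : 0 < s -> (forall y, differentiable phi y) ->
  (forall y, differentiable (fun z => 'D_a phi z) y) ->
  exists xi, exists eta, [/\ 0 < xi < s, 0 < eta < s &
  phi (s *: a + (s *: b + x)) - phi (s *: a + x) - (phi (s *: b + x) - phi x)
   = 'D_b (fun z => 'D_a phi z) (eta *: b + (xi *: a + x)) * s * s].
Proof.
move=> s0 d dD.
pose g1 := fun r => phi (r *: a + (s *: b + x)) - phi (r *: a + x).
pose dg1 := fun r => 'D_a phi (r *: a + (s *: b + x)) - 'D_a phi (r *: a + x).
have hd : forall r : R, is_derive r 1 g1 (dg1 r).
  move=> r; rewrite /g1 /dg1.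
  exact: (is_deriveB (line_deriv phi a (s *: b + x) r (d _)) (line_deriv phi a x r (d _))).
have cont : {within `[0, s], continuous g1}.
  by apply: derivable_within_continuous => r _; have [] := hd r.
have [xi xiI H] := @MVT R g1 dg1 0 s s0 (fun r _ => hd r) cont.
move: H; rewrite /g1 /dg1 scale0r !add0r subr0 => ->.
have [eta etaI H2] := line_MVT (fun z => 'D_a phi z) b (xi *: a + x) s s0 dD.
exists xi, eta; split => //.
by rewrite addrCA H2.
Qed.

Lemma swap4 (p qa qb c : R) : p - qa - (qb - c) = p - qb - (qa - c).
Proof. by ring. Qed.

Lemma clairaut (phi : E -> R) (a b x : E) : (forall y, differentiable phi y) ->
  (forall y, differentiable (fun z => 'D_a phi z) y) ->
  (forall y, differentiable (fun z => 'D_b phi z) y) ->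
  continuous (fun y => 'D_b (fun z => 'D_a phi z) y) ->
  continuous (fun y => 'D_a (fun z => 'D_b phi z) y) ->
  'D_b (fun z => 'D_a phi z) x = 'D_a (fun z => 'D_b phi z) x.
Proof.
move=> d dA dB cA cB.
set A := fun y => _ in cA; set B := fun y => _ in cB.
apply/eqP; apply/negPn/negP => neq.
pose dd := `|A x - B x|.
have dd0 : 0 < dd by rewrite normr_gt0 subr_eq0.
have /cvgrPdist_lt /(_ (dd / 2)) hA := cA x.
have /cvgrPdist_lt /(_ (dd / 2)) hB := cB x.
have dd2 : 0 < dd / 2 by rewrite divr_gt0.
have hA' : nbhs x (fun t => `|A x - A t| < dd / 2) := hA dd2.
have hB' : nbhs x (fun t => `|B x - B t| < dd / 2) := hB dd2.
have [eps /= eps0 Heps] := iffLR (nbhs_ballP _ _) (filterI hA' hB').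
pose M := `|a| + `|b| + 1.
have M0 : 0 < M by rewrite /M ltr_pwDr // addr_ge0.
pose s := eps / (2 * M).
have s0 : 0 < s by rewrite divr_gt0 // mulr_gt0.
have [xi [eta [xiI etaI H1]]] := MVT2 phi a b x s s0 d dA.
have [xi' [eta' [xiI' etaI' H2]]] := MVT2 phi b a x s s0 d dB.
move: H1 H2; rewrite -/(A _) -/(B _) => H1 H2; clearbody A B.
have close : forall (u w : R) (p q : E), 0 < u < s -> 0 < w < s -> `|p| + `|q| <= M ->
    ball x eps (w *: q + (u *: p + x)).
  move=> u w p q /andP[u0 us] /andP[w0 ws] pq.
  rewrite -ball_normE /= addrA opprD addrCA subrr addr0 normrN.
  apply: (le_lt_trans (ler_normD _ _)); rewrite !normrZ !ger0_norm ?ltW //.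
  have e1 : w * `|q| <= s * `|q| by rewrite ler_wpM2r // ltW.
  have e2 : u * `|p| <= s * `|p| by rewrite ler_wpM2r // ltW.
  have e3 : s * (`|p| + `|q|) <= s * M by rewrite ler_wpM2l // ltW.
  have e4 : s * M < eps.
    have -> : s * M = eps / 2 by rewrite /s invfM -!mulrA mulVf ?gt_eqF // mulr1.
    by rewrite ltr_pdivrMr // ltr_pMr // ltr1n.
  apply: (le_lt_trans (lerD e1 e2)); rewrite -mulrDr addrC.
  exact: (le_lt_trans e3 e4).
have Mab : `|a| + `|b| <= M by rewrite /M lerDl.
have Mba : `|b| + `|a| <= M by rewrite addrC.
have [Hp _] := Heps _ (close xi eta a b xiI etaI Mab).
have [_ Hq] := Heps _ (close xi' eta' b a xiI' etaI' Mba).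
have E1 : A (eta *: b + (xi *: a + x)) = B (eta' *: a + (xi' *: b + x)).
  have ss : s * s != 0 by apply: mulf_neq0; rewrite gt_eqF.
  apply: (mulIf ss); rewrite [LHS]mulrA [RHS]mulrA -H1 -H2.
  by rewrite [s *: a + (s *: b + x)]addrCA swap4.
have Hdd : dd <= `|A x - A (eta *: b + (xi *: a + x))| + `|B (eta' *: a + (xi' *: b + x)) - B x|.
  rewrite -[X in X <= _]/(`|A x - B x|).
  have -> : A x - B x = (A x - A (eta *: b + (xi *: a + x))) + (B (eta' *: a + (xi' *: b + x)) - B x).
    by rewrite E1 addrA subrK.
  exact: ler_normD.
rewrite distrC in Hq.
have := le_lt_trans Hdd (ltrD Hp Hq).
by rewrite -splitr ltxx.
Qed.
End T.


Section Main.
Variables (R : realType) (n : nat).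
Local Notation E := 'rV[R]_n.

Lemma sclairaut (phi : E -> R) (a b x : E) : smooth phi ->
  'D_b (fun z => 'D_a phi z) x = 'D_a (fun z => 'D_b phi z) x.
Proof.
move=> s; apply: clairaut.
- by move=> y; apply: smooth_diff.
- by move=> y; apply: smooth_diff; apply: smooth_D.
- by move=> y; apply: smooth_diff; apply: smooth_D.
- exact: (@smooth_D R n R^o _ b (@smooth_D R n R^o _ a s) 0%N).
- exact: (@smooth_D R n R^o _ a (@smooth_D R n R^o _ b s) 0%N).
Qed.

Lemma D_lie (F : E -> E) (phi : E -> R) v y : smooth F -> smooth phi ->
  'D_v (lie F phi) y = 'D_('D_v F y) phi y + 'D_(F y) (fun z => 'D_v phi z) y.
Proof.
move=> sF sp.
have dp : forall z, differentiable phi z by move=> z; apply: smooth_diff.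
have -> : lie F phi = \sum_(k < n) (fun x => F x 0 k * 'D_('e_k) phi x).
  by rewrite fct_sumE; apply/funext => x; rewrite /lie D_lin.
have dFk : forall k z, differentiable (fun x => F x 0 k) z.
  move=> k z; apply: (@smooth_diff R n R^o) => m; exact: Ck_coord.
have dPk : forall k z, differentiable (fun x => 'D_('e_k) phi x) z.
  by move=> k z; apply: smooth_diff; apply: smooth_D.
rewrite derive_sum; last first.
  move=> k; apply: derivableM; apply: diff_derivable; [exact: dFk | exact: dPk].
have dDv : differentiable (fun z => 'D_v phi z) y by apply: smooth_diff; apply: smooth_D.
rewrite (@D_lin R n phi y ('D_v F y) (dp y)) (@D_lin R n (fun z => 'D_v phi z) y (F y) dDv).
rewrite -big_split /=; apply: eq_bigr => k _.
rewrite deriveM; [|apply: diff_derivable; exact: dFk|apply: diff_derivable; exact: dPk].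
rewrite derive_mx ?mxE; last by apply: diff_derivable; apply: smooth_diff.
rewrite (sclairaut _ ('e_k) v) // addrC; congr (_ + _); exact: mulrC.
Qed.

Lemma chain2 (psi : E -> R) (X : R -> E) t :
  differentiable psi (X t) -> derivable X t 1 ->
  derivable (fun s => psi (X s)) t 1 /\ 'D_1 (fun s => psi (X s)) t = 'D_('D_1 X t) psi (X t).
Proof. exact: chain. Qed.

Lemma w_deriv (phi : E -> R) (X V : R -> E) t : smooth phi -> derivable X t 1 -> derivable V t 1 ->
  derivable (fun s => 'D_(V s) phi (X s)) t 1 /\
  'D_1 (fun s => 'D_(V s) phi (X s)) t =
    'D_('D_1 V t) phi (X t) + 'D_('D_1 X t) (fun z => 'D_(V t) phi z) (X t).
Proof.
move=> sp dX dV.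
have dp : forall z, differentiable phi z by move=> z; apply: smooth_diff.
have -> : (fun s => 'D_(V s) phi (X s)) = \sum_(l < n) (fun s => V s 0 l * 'D_('e_l) phi (X s)).
  by rewrite fct_sumE; apply/funext => s; rewrite D_lin.
have dVl : forall l, derivable (fun s => V s 0 l) t 1.
  by move=> l; apply: (iffLR (derivable_mxP V t 1) dV 0 l).
have dPl : forall l : 'I_n, derivable (fun s => 'D_('e_l) phi (X s)) t 1 /\
    'D_1 (fun s => 'D_('e_l) phi (X s)) t = 'D_('D_1 X t) (fun z => 'D_('e_l) phi z) (X t).
  by move=> l; apply: chain2 => //; apply: smooth_diff; apply: smooth_D.
split.
  by apply: derivable_sum => l; apply: derivableM => //; case: (dPl l).
rewrite derive_sum; last by move=> l; apply: derivableM => //; case: (dPl l).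
rewrite (@D_lin R n phi (X t) ('D_1 V t) (dp _)).
rewrite (sclairaut _ (V t) ('D_1 X t) _ sp).
have dDX : differentiable (fun z => 'D_('D_1 X t) phi z) (X t) by apply: smooth_diff; apply: smooth_D.
rewrite (@D_lin R n _ (X t) (V t) dDX).
rewrite -big_split /=; apply: eq_bigr => l _.
rewrite deriveM //; last by case: (dPl l).
case: (dPl l) => _ ->.
rewrite (sclairaut _ ('D_1 X t) ('e_l) _ sp).
rewrite (derive_mx dV) mxE.
rewrite addrC; congr (_ + _); exact: mulrC.
Qed.

Lemma key_id du (f : E -> E) (g : 'I_du -> E -> E) (u : 'rV[R]_du) (phi : E -> R) (X V : R -> E) t :
  smooth f -> (forall j, smooth (g j)) -> smooth phi -> derivable X t 1 -> derivable V t 1 ->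
  'D_1 X t = f (X t) + \sum_(j < du) u 0 j *: g j (X t) ->
  'D_1 V t = 'D_(V t) f (X t) + \sum_(j < du) u 0 j *: 'D_(V t) (g j) (X t) ->
  'D_1 (fun s => 'D_(V s) phi (X s)) t =
    'D_(V t) (lie f phi) (X t) + \sum_(j < du) u 0 j * 'D_(V t) (lie (g j) phi) (X t).
Proof.
move=> sf sg sp dX dV hX hV.
have [_ ->] := w_deriv _ _ _ _ sp dX dV.
have dp : differentiable phi (X t) by apply: smooth_diff.
have dDp : differentiable (fun z => 'D_(V t) phi z) (X t) by apply: smooth_diff; apply: smooth_D.
rewrite hX hV !D_add // !D_sum //.
rewrite (D_lie _ _ _ _ sf sp).
under eq_bigr do rewrite D_scale //.
under [X in _ = _ + X]eq_bigr do rewrite (D_lie _ _ _ _ (sg _) sp) mulrDr.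
under [X in _ + _ + (_ + X) = _]eq_bigr do rewrite D_scale //.
rewrite big_split /= addrACA.
by [].
Qed.

End Main.


Section Lip.
Variables (R : realType) (n : nat).
Local Notation E := 'rV[R]_n.

Lemma coord_le m (M : 'rV[R]_m) j : `|M 0 j| <= `|M|.
Proof. rewrite [leRHS]/Num.Def.normr/= mx_normrE. exact: (le_bigmax _ _ (0, j)). Qed.

Lemma lip0 m p (G : E -> 'rV[R]_m) (H : E -> 'rV[R]_p) (y v : E) (L : R) (N : set E) j :
  0 < L -> derivable H y v -> 'D_v H y = 0 -> nbhs y N ->
  (forall xa xb, N xa -> N xb -> `|G xa - G xb| <= L * `|H xa - H xb|) ->
  derivable (fun x => G x 0 j) y v -> 'D_v (fun x => G x 0 j) y = 0.
Proof.
move=> L0 dH DH Ny lip dG.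
set D := 'D_v _ y.
have cG : (fun h : R => h^-1 *: (G (h *: v + y) 0 j - G y 0 j)) @ 0^' --> D := dG.
have cH : (fun h : R => h^-1 *: (H (h *: v + y) - H y)) @ 0^' --> (0 : 'rV[R]_p).
  by rewrite -DH; exact: dH.
have cont : {for 0, continuous (fun h : R => h *: v + y)}.
  apply: differentiable_continuous; apply/derivable1_diffP; exact: (@lineX R n v y 0).1.
have hN : \forall h \near 0^', N (h *: v + y).
  apply: nbhs_dnbhs; apply: cont; by rewrite /= scale0r add0r.
apply/eqP; rewrite -normr_le0; apply/ler_addgt0Pr => e e0; rewrite add0r.
have e2 : 0 < e / 2 by rewrite divr_gt0.
have e2L : 0 < e / 2 / L by rewrite divr_gt0.
have /cvgrPdist_lt /(_ _ e2) hG := cG.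
have /cvgrPdist_lt /(_ _ e2L) hH := cH.
have PF := @Proper_dnbhs_numFieldType R 0.
have hall := @filterI R 0^' PF _ _ (@filterI R 0^' PF _ _ hG hH) hN.
have [h [[h1 h2] h3]] := @filter_ex R 0^' _ _ hall.
have Ny' : N y by apply: nbhs_singleton.
have hq : `|h^-1 *: (G (h *: v + y) 0 j - G y 0 j)| <= L * `|h^-1 *: (H (h *: v + y) - H y)|.
  rewrite !normrZ mulrCA ler_wpM2l //.
  apply: le_trans (lip _ _ h3 Ny').
  by have := coord_le _ (G (h *: v + y) - G y) j; rewrite !mxE.
rewrite sub0r normrN in h2.
have : `|D| < e / 2 + e / 2.
  apply: (le_lt_trans (_ : `|D| <= `|D - h^-1 *: (G (h *: v + y) 0 j - G y 0 j)| + `|h^-1 *: (G (h *: v + y) 0 j - G y 0 j)|)).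
    by rewrite -{1}(subrK (h^-1 *: (G (h *: v + y) 0 j - G y 0 j)) D) ler_normD.
  apply: ltrD => //; apply: (le_lt_trans hq).
  by rewrite -ltr_pdivlMl // mulrC.
by rewrite -splitr => /ltW.
Qed.
End Lip.


Section W0.
Variables (R : realType) (n : nat).
Local Notation E := 'rV[R]_n.
Lemma within0 (T : R) (Y : R -> E) (P : set E) :
  {within [set t | 0 <= t < T], continuous Y} -> 0 < T -> nbhs (Y 0) P ->
  exists2 eps, 0 < eps & forall s, 0 <= s < T -> `|s| < eps -> P (Y s).
Proof.
move=> cY T0 hP.
have A0 : [set t : R | 0 <= t < T] 0 by rewrite /= lexx T0.
have := (iffLR (subspace_continuousP _ _) cY) 0 A0 P hP.
rewrite /within /= => hw.
have [eps eps0 He] := iffLR (nbhs_ballP _ _) hw.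
exists eps => // s sI ss; apply: (He s) => //.
by rewrite -ball_normE /= sub0r normrN.
Qed.
End W0.

Theorem proposition5 (R : realType) (dx du d_o : nat)
  (f : 'rV[R]_dx -> 'rV[R]_dx) (g : 'I_du -> 'rV[R]_dx -> 'rV[R]_dx)
  (h : 'rV[R]_dx -> R) (S : set 'rV[R]_dx) :
  smooth f -> (forall j, smooth (g j)) -> smooth h ->
  open S ->
  immersion_on S (Hmap f h d_o) ->
  (forall i : nat, (1 <= i <= d_o)%N -> forall x, S x ->
     exists L : R, 0 < L /\
     exists N : set 'rV[R]_dx, nbhs x N /\
       forall xa xb, N xa -> N xb ->
         `| lieG g (lieN f i.-1 h) xa - lieG g (lieN f i.-1 h) xb |
           <= L * `| Hmap f h i xa - Hmap f h i xb |) ->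
  unif_inf_observable f g h S.
Proof.
move=> sf sg sh oS imm lipH x v Sx v0 T T0 u uC1 X V [X0 [V0 [cX [cV Hode]]]].
apply: contrapT => Hno.
have nS : nbhs (X 0) S by rewrite X0; exact: oS.
have [dX dX0 HdX] := within0 _ _ _ _ _ cX T0 nS.
pose T' := Num.min dX T.
have T'0 : 0 < T' by rewrite lt_min dX0 T0.
have T'T : T' <= T by rewrite /T' ge_min lexx orbT.
have T'd : T' <= dX by rewrite /T' ge_min lexx.
have inS : forall t, 0 <= t < T' -> forall s, 0 <= s <= t -> S (X s).
  move=> t /andP[t0 tT] s /andP[s0 st]; apply: HdX.
    by rewrite s0 (le_lt_trans st (lt_le_trans tT T'T)).
  by rewrite ger0_norm // (le_lt_trans st (lt_le_trans tT T'd)).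
have w0 : forall t, 0 <= t < T' -> 'D_(V t) h (X t) = 0.
  move=> t tI; apply/eqP; apply: contrapT => hne; apply: Hno; exists t; split.
  - by case/andP: tI => t0 tT; rewrite t0 (lt_le_trans tT T'T).
  - exact/negP.
  - exact: inS.
have ode : forall t, 0 < t < T' -> [/\ derivable X t 1,
        'D_1 X t = f (X t) + \sum_(j < du) (u t) ord0 j *: g j (X t),
        derivable V t 1 &
        'D_1 V t = 'D_(V t) f (X t)
                   + \sum_(j < du) (u t) ord0 j *: 'D_(V t) (g j) (X t)].
  by move=> t /andP[t0 tT]; apply: Hode; rewrite t0 (lt_le_trans tT T'T).
have claim : forall i, (i <= d_o)%N -> forall k, (k < i)%N -> forall t, 0 < t < T' ->
    'D_(V t) (lieN f k h) (X t) = 0.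
  elim=> [|i IH] // iS k; rewrite ltnS leq_eqVlt => /orP[/eqP ->|ki]; last first.
    by apply: IH => //; exact: ltnW.
  move=> t tI.
  case: i IH iS => [|j] IH iS.
    by apply: w0; case/andP: tI => t0 tT; rewrite ltW ?t0 ?tT.
  pose phi := lieN f j h.
  have sphi : smooth phi by apply: smooth_lieN.
  have [dXt eX dVt eV] := ode t tI.
  have wz : 'D_1 (fun s => 'D_(V s) phi (X s)) t = 0.
    have tI' : t \in `]0, T'[%R by rewrite in_itv.
    have hn := near_in_itvoo tI'.
    rewrite (@near_eq_derive _ _ _ _ (cst 0) t 1) ?derive_cst //.
    apply: filterS hn => s; rewrite in_itv /= => sI.
    by apply: IH => //; exact: ltnW.
  rewrite (key_id _ _ _ _ _ _ _ _ _ _ sf sg sphi dXt dVt eX eV) in wz.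
  have tS : S (X t).
    case/andP: tI => t0 tT; apply: (inS t); first by rewrite (ltW t0) tT.
    by rewrite (ltW t0) lexx.
  have iS' : (1 <= j.+1 <= d_o)%N by rewrite /= (ltnW iS).
  have [L [L0 [N [Nn lipN]]]] := lipH j.+1 iS' (X t) tS.
  have dH : derivable (Hmap f h j.+1) (X t) (V t).
    apply/derivable_mxP => i0 k0.
    have -> : (fun z => Hmap f h j.+1 z i0 k0) = lieN f k0 h by apply/funext => z; rewrite mxE.
    by apply: diff_derivable; apply: smooth_diff; apply: smooth_lieN.
  have DH : 'D_(V t) (Hmap f h j.+1) (X t) = 0.
    rewrite derive_mx //; apply/matrixP => i0 k0; rewrite !mxE.
    have -> : (fun z => Hmap f h j.+1 z i0 k0) = lieN f k0 h by apply/funext => z; rewrite mxE.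
    by apply: (IH (ltnW iS)).
  have gz : forall jj, 'D_(V t) (lie (g jj) phi) (X t) = 0.
    move=> jj.
    have dG : derivable (fun z => lieG g phi z 0 jj) (X t) (V t).
      have -> : (fun z => lieG g phi z 0 jj) = lie (g jj) phi by apply/funext => z; rewrite mxE.
      by apply: diff_derivable; apply: smooth_diff; apply: smooth_lie.
    have := lip0 _ _ _ _ _ _ _ _ _ _ _ L0 dH DH Nn lipN dG.
    by have -> : (fun z => lieG g phi z 0 jj) = lie (g jj) phi by apply/funext => z; rewrite mxE.
  move: wz; rewrite big1 ?addr0 //; last by move=> jj _; rewrite gz mulr0.
have Vz : forall t, 0 < t < T' -> V t = 0.
  move=> t tI.
  have tS : S (X t).
    case/andP: tI => t0 tT; apply: (inS t); first by rewrite (ltW t0) tT.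
    by rewrite (ltW t0) lexx.
  have [dHd inj] := imm (X t) tS.
  apply: inj; rewrite -deriveE //.
  rewrite derive_mx; last exact: diff_derivable.
  apply/matrixP => i0 k0; rewrite !mxE.
  have -> : (fun z => Hmap f h d_o z i0 k0) = lieN f k0 h by apply/funext => z; rewrite mxE.
  exact: (claim d_o (leqnn _) k0 (ltn_ord k0) t tI).
have nV : nbhs (V 0) (ball v `|v|) by rewrite V0; apply: nbhsx_ballx; rewrite normr_gt0.
have [dV dV0 HdV] := within0 _ _ _ _ _ cV T0 nV.
pose s := Num.min dV T' / 2.
have m0 : 0 < Num.min dV T' by rewrite lt_min dV0 T'0.
have s0 : 0 < s by rewrite divr_gt0.
have sm : s < Num.min dV T' by rewrite /s ltr_pdivrMr // ltr_pMr // ltr1n.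
have sT' : s < T' by apply: (lt_le_trans sm); rewrite ge_min lexx orbT.
have sdV : s < dV by apply: (lt_le_trans sm); rewrite ge_min lexx.
have sI : 0 <= s < T by rewrite (ltW s0) (lt_le_trans sT' T'T).
have sN : `|s| < dV by rewrite ger0_norm // ltW.
have := HdV s sI sN.
rewrite Vz; last by rewrite s0 sT'.
by rewrite -ball_normE /= subr0 ltxx.
Qed.
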